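(* Let $\tilde w:\mathcal D^n(\delta)\to\mathcal D^n(\delta)$ and let $C\subset\mathcal D^n(\delta)$ be nonempty with $\tilde w(C)\subset C$. Let $\{\Lambda_\alpha\}_{\alpha\in\mathcal I}$ be the (possibly uncountable) family of all absorbing sets for $\tilde w$ in $C$. Then $\mathcal M:=\bigcap_{\alpha\in\mathcal I}\Lambda_\alpha$ is the set of all periodic points of $\tilde w$ in $C$, and hence $\mathcal M=\tilde w(\mathcal M)$.
   Context: $\mathcal D^n(\delta)=\{\delta m:m\in\mathbb Z^n\}\subset\mathbb R^n$ for fixed $\delta>0$. For a map $\tilde w$ and nonempty $C$ with $\tilde w(C)\subset C$, a set $\Lambda\subset C$ is an absorbing set for $\tilde w$ in $C$ if for every $\tilde x\in C$ there is $N\in\mathbb N$ with $\tilde w^{\circ i}(\tilde x)\in\Lambda$ for all $i\ge N$. A point $\tilde x$ is periodic if $\tilde w^{\circ k}(\tilde x)=\tilde x$ for some integer $k\ge1$. *)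

(* Defs.v *)
From HB Require Import structures.
From mathcomp Require Import all_boot all_order all_algebra.
From mathcomp Require Import all_classical all_reals.
Set Implicit Arguments. Unset Strict Implicit. Unset Printing Implicit Defensive.
Import Order.TTheory GRing.Theory Num.Theory.
Local Open Scope ring_scope.
Local Open Scope classical_set_scope.

Definition lattice (R : realType) (n : nat) (delta : R) : set 'rV[R]_n :=
  [set x | exists m : 'rV[int]_n, x = delta *: map_mx (fun z : int => z%:~R) m].

Definition absorbing (T : Type) (w : T -> T) (C Lambda : set T) : Prop :=
  Lambda `<=` C /\
  forall x, C x -> exists N : nat, forall i : nat, (N <= i)%N -> Lambda (iter i w x).

Definition periodic (T : Type) (w : T -> T) (x : T) : Prop :=
  exists k : nat, (1 <= k)%N /\ iter k w x = x.

(* Main.v *)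
Require Import Defs.
From HB Require Import structures.
From mathcomp Require Import all_boot all_order all_algebra.
From mathcomp Require Import all_classical all_reals.
Local Open Scope ring_scope.
Local Open Scope classical_set_scope.

Lemma iterC_in (T : Type) (w : T -> T) (C : set T) (hwC : w @` C `<=` C) x i :
  C x -> C (iter i w x).
Proof. move=> Cx; elim: i => [|i IH] //=; apply: hwC; by exists (iter i w x). Qed.

Lemma iter_mul (T : Type) (w : T -> T) x k m : iter k w x = x -> iter (m * k) w x = x.
Proof.
move=> hk; elim: m => [|m IH]; first by rewrite mul0n.
by rewrite mulSn iterD IH hk.
Qed.

Lemma per_in_abs (T : Type) (w : T -> T) (C L : set T) x :
  absorbing w C L -> C x -> periodic w x -> L x.
Proof.
move=> [_ hL] Cx [k [k1 hk]].
have [N HN] := hL x Cx.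
have := HN (N * k)%N; rewrite iter_mul //; apply.
by rewrite leq_pmulr.
Qed.

Lemma nonper_abs (T : Type) (w : T -> T) (C : set T) (hwC : w @` C `<=` C) x :
  ~ periodic w x -> absorbing w C (C `\` [set x]).
Proof.
move=> np; split; first by move=> y [].
move=> y Cy.
apply: contrapT => hne.
have H : forall N, exists i, (N <= i)%N /\ iter i w y = x.
  move=> N; apply: contrapT => hn; apply: hne; exists N => i Ni.
  split; first exact: iterC_in.
  move=> /= e; apply: hn; by exists i.
have [i0 [_ h0]] := H 0%N.
have [i1 [h1 e1]] := H i0.+1.
apply: np; exists (i1 - i0)%N; split; first by rewrite subn_gt0.
by rewrite -{1}h0 -iterD subnK // ltnW.
Qed.

Theorem theorem2 (R : realType) (n : nat) (delta : R) (hdelta : 0 < delta)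
    (w : 'rV[R]_n -> 'rV[R]_n) (C : set 'rV[R]_n)
    (hw : forall x, @lattice R n delta x -> @lattice R n delta (w x))
    (hCD : C `<=` @lattice R n delta) (hC0 : C !=set0) (hwC : w @` C `<=` C) :
  let M := \bigcap_(L in [set L : set 'rV[R]_n | absorbing w C L]) L in
  M = [set x | C x /\ periodic w x] /\ M = w @` M.
Proof.
move=> M.
have hM : M = [set x | C x /\ periodic w x].
  apply/seteqP; split => x.
  - move=> Mx.
    have Cx : C x.
      apply: (Mx C) => /=; split => // y Cy; exists 0%N => i _.
      exact: iterC_in.
    split => //; apply: contrapT => np.
    have [_ hx] := Mx _ (@nonper_abs _ w C hwC x np); apply: hx; reflexivity.
  - move=> [Cx px] L /= aL; exact: per_in_abs aL Cx px.
split => //; rewrite hM; apply/seteqP; split => x.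
- move=> [Cx [k [k1 hk]]].
  exists (iter k.-1 w x).
    split; first exact: iterC_in.
    exists k; split => //.
    by rewrite -iterD addnC iterD hk.
  by rewrite -[w _]/(iter k.-1.+1 w x) prednK.
- move=> [y [Cy [k [k1 hk]]] <-]; split.
    apply: hwC; by exists y.
  exists k; split => //.
  by rewrite -iterSr iterS hk.
Qed.
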